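(* Let $M\ge 2$ modalities be given, with latent representations $z^{(1)},\ldots,z^{(M)}\in\mathbb{R}^d$ (Euclidean norm $\|\cdot\|_2$; $\mathrm{dist}(x,\mathcal{S})=\inf_{s\in\mathcal{S}}\|x-s\|_2$, $\mathcal{B}(\mathcal{S},r)=\{x:\mathrm{dist}(x,\mathcal{S})\le r\}$). Let $\epsilon>0$, $\delta>2\epsilon$, and for each modality $m$ and class $c\in\{1,\ldots,K\}$ let $\mathcal{M}_c^{(m)}\subset\mathbb{R}^d$ be nonempty sets with $\inf_{u\in\mathcal{M}_i^{(m)},v\in\mathcal{M}_j^{(m)}}\|u-v\|_2\ge\delta$ for all $m$ and $i\neq j$. Fix a modality $B$ and classes $y\neq k$ with $z^{(B)}\in\mathcal{B}(\mathcal{M}_k^{(B)},\epsilon)$. Suppose that for every modality $n\neq B$ one has $z^{(n)}\in\mathcal{B}(\mathcal{M}_y^{(n)},\epsilon)$ and the map $\Phi_{n\to B}:\mathbb{R}^d\to\mathbb{R}^d$ is $\xi$-semantically consistent with $\xi\le\epsilon$, i.e. $\mathrm{dist}(\Phi_{n\to B}(u),\mathcal{M}_y^{(B)})\le\xi$ for all $u\in\mathcal{B}(\mathcal{M}_y^{(n)},\epsilon)$. Let $\lambda\ge0$, $\kappa>0$, $\theta_r\in\mathbb{R}$, $\epsilon_\gamma>0$, let $\mathcal{E}_{\mathrm{intra}}^{(n)}\in\mathbb{R}$ be arbitrary, let $\sigma$ be the logistic sigmoid, and define $$\mathcal{E}_{\mathrm{inter}}^{(n\to B)}=\|\Phi_{n\to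 B}(z^{(n)})-z^{(B)}\|_2^2,\qquad \gamma_{\mathrm{int}}^{(B)}=\lambda\sum_{n\neq B}\sigma\big(\theta_r-\mathcal{E}_{\mathrm{intra}}^{(n)}\big)\exp\!\Big(-\frac{\mathcal{E}_{\mathrm{inter}}^{(n\to B)}}{\kappa}\Big),\qquad \tilde{\gamma}_{\mathrm{int}}^{(B)}=\gamma_{\mathrm{int}}^{(B)}+\epsilon_\gamma.$$ Then, with $D=(\delta-2\epsilon)^2$, $$\gamma_{\mathrm{int}}^{(B)}\le\lambda(M-1)\exp\!\Big(-\frac{D}{\kappa}\Big),\qquad\text{and consequently}\qquad \tilde{\gamma}_{\mathrm{int}}^{(B)}\le\lambda(M-1)\exp\!\Big(-\frac{D}{\kappa}\Big)+\epsilon_\gamma.$$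
   Context: This is the multimodal fusion setting: $\gamma_{\mathrm{int}}^{(B)}$ is the interaction gate of modality $B$, aggregating cross-modal consensus from the other modalities $n$, weighted by reliability scores $r^{(n)}=\sigma(\theta_r-\mathcal{E}_{\mathrm{intra}}^{(n)})\in[0,1]$ where $\mathcal{E}_{\mathrm{intra}}^{(n)}$ is an intra-modal transport cost; $\epsilon_\gamma$ is a small numerical floor. The hypothesis says modality $B$ encodes a class $k$ that conflicts with the class $y$ encoded by every other (reliable, semantically consistent) modality. *)

(* Defs.v *)
From HB Require Import structures.
From mathcomp Require Import all_boot all_order all_algebra.
From mathcomp Require Import all_classical all_reals all_analysis.
Set Implicit Arguments. Unset Strict Implicit. Unset Printing Implicit Defensive.
Import Order.TTheory GRing.Theory Num.Theory.
Local Open Scope classical_set_scope.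
Local Open Scope ring_scope.

Definition norm2 {R : realType} {d : nat} (x : 'rV[R]_d) : R :=
  Num.sqrt (\sum_(i < d) (x ord0 i) ^+ 2).

Definition dist {R : realType} {d : nat} (x : 'rV[R]_d) (S : set 'rV[R]_d) : R :=
  inf [set norm2 (x - s) | s in S].

Definition nbhd_set {R : realType} {d : nat} (S : set 'rV[R]_d) (r : R) : set 'rV[R]_d :=
  [set x | dist x S <= r].

Definition set_gap {R : realType} {d : nat} (S T : set 'rV[R]_d) : R :=
  inf [set norm2 (u - v) | u in S & v in T].

Definition sigmoid {R : realType} (t : R) : R := 1 / (1 + expR (- t)).

Definition E_inter {R : realType} {d : nat} (Phi : 'rV[R]_d -> 'rV[R]_d)
  (zn zB : 'rV[R]_d) : R := (norm2 (Phi zn - zB)) ^+ 2.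

Definition gamma_int {R : realType} {d M : nat} (lam kappa theta_r : R)
  (E_intra : 'I_M -> R) (Phi : 'I_M -> 'I_M -> 'rV[R]_d -> 'rV[R]_d)
  (z : 'I_M -> 'rV[R]_d) (B : 'I_M) : R :=
  lam * \sum_(n < M | n != B)
     sigmoid (theta_r - E_intra n) * expR (- (E_inter (Phi n B) (z n) (z B) / kappa)).

Definition gamma_int_tilde {R : realType} {d M : nat} (lam kappa theta_r eps_g : R)
  (E_intra : 'I_M -> R) (Phi : 'I_M -> 'I_M -> 'rV[R]_d -> 'rV[R]_d)
  (z : 'I_M -> 'rV[R]_d) (B : 'I_M) : R :=
  gamma_int lam kappa theta_r E_intra Phi z B + eps_g.

(* Main.v *)
Require Import Defs.
From HB Require Import structures.
From mathcomp Require Import all_boot all_order all_algebra.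
From mathcomp Require Import all_classical all_reals all_analysis.
From mathcomp Require Import ring lra.
Import Order.TTheory GRing.Theory Num.Theory.
Local Open Scope classical_set_scope.
Local Open Scope ring_scope.

Section Aux.
Variables (R : realType) (d : nat).

Definition N2 (f : 'I_d -> R) : R := Num.sqrt (\sum_(i < d) f i ^+ 2).

Lemma cs (a b : 'I_d -> R) :
  \sum_(i < d) a i * b i <= N2 a * N2 b.
Proof.
rewrite /N2.
set A := \sum_(i < d) a i ^+ 2. set B := \sum_(i < d) b i ^+ 2.
have A0 : 0 <= A by apply: sumr_ge0 => i _; exact: sqr_ge0.
have B0 : 0 <= B by apply: sumr_ge0 => i _; exact: sqr_ge0.
set s := Num.sqrt A. set t := Num.sqrt B.
have s0 : 0 <= s by exact: sqrtr_ge0.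
have t0 : 0 <= t by exact: sqrtr_ge0.
have sA : s ^+ 2 = A by rewrite sqr_sqrtr.
have tB : t ^+ 2 = B by rewrite sqr_sqrtr.
have [sz|snz] := eqVneq s 0.
  have Az : A = 0 by rewrite -sA sz expr0n.
  have ai : forall i, a i = 0.
    move=> i; apply/eqP; rewrite -sqrf_eq0; apply/eqP.
    by apply: (psumr_eq0P (P := xpredT) (fun i _ => sqr_ge0 (a i)) Az).
  rewrite sz mul0r big1 // => i _; by rewrite ai mul0r.
have [tz|tnz] := eqVneq t 0.
  have Bz : B = 0 by rewrite -tB tz expr0n.
  have bi : forall i, b i = 0.
    move=> i; apply/eqP; rewrite -sqrf_eq0; apply/eqP.
    by apply: (psumr_eq0P (P := xpredT) (fun i _ => sqr_ge0 (b i)) Bz).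
  rewrite tz mulr0 big1 // => i _; by rewrite bi mulr0.
have sp : 0 < s by rewrite lt_neqAle eq_sym snz s0.
have tp : 0 < t by rewrite lt_neqAle eq_sym tnz t0.
have key : \sum_(i < d) (2 * s * t) * (a i * b i) <=
           \sum_(i < d) (t ^+ 2 * a i ^+ 2 + s ^+ 2 * b i ^+ 2).
  apply: ler_sum => i _.
  have := sqr_ge0 (t * a i - s * b i). nra.
rewrite -mulr_sumr big_split /= -!mulr_sumr -/A -/B -sA -tB in key.
have st : 0 < s * t by exact: mulr_gt0.
nra.
Qed.

Lemma N2_ge0 f : 0 <= N2 f.
Proof. exact: sqrtr_ge0. Qed.

Lemma N2_tri (a b : 'I_d -> R) : N2 (fun i => a i + b i) <= N2 a + N2 b.
Proof.
have h := cs a b.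
have ha : N2 a ^+ 2 = \sum_(i < d) a i ^+ 2.
  by rewrite sqr_sqrtr //; apply: sumr_ge0 => i _; exact: sqr_ge0.
have hb : N2 b ^+ 2 = \sum_(i < d) b i ^+ 2.
  by rewrite sqr_sqrtr //; apply: sumr_ge0 => i _; exact: sqr_ge0.
have na := N2_ge0 a. have nb := N2_ge0 b.
rewrite {1}/N2 -[X in _ <= X]ger0_norm; last by rewrite addr_ge0 // sqrtr_ge0.
rewrite -sqrtr_sqr ler_sqrt; last exact: sqr_ge0.
have -> : \sum_(i < d) (a i + b i) ^+ 2 =
  \sum_(i < d) a i ^+ 2 + \sum_(i < d) b i ^+ 2 + 2 * \sum_(i < d) a i * b i.
  rewrite mulr_sumr -!big_split /=; apply: eq_bigr => i _; ring.
rewrite -/(N2 a) -/(N2 b) -ha -hb. nra.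
Qed.

End Aux.

Lemma norm2D {R : realType} {d} (x y : 'rV[R]_d) : norm2 (x + y) <= norm2 x + norm2 y.
Proof.
have -> : norm2 (x + y) = @N2 R d (fun i => x ord0 i + y ord0 i).
  by rewrite /norm2 /N2; congr Num.sqrt; apply: eq_bigr => i _; rewrite mxE.
exact: (@N2_tri R d).
Qed.

Lemma norm2N {R : realType} {d} (x : 'rV[R]_d) : norm2 (- x) = norm2 x.
Proof.
by rewrite /norm2; congr Num.sqrt; apply: eq_bigr => i _; rewrite mxE sqrrN.
Qed.

Lemma norm2_ge0 {R : realType} {d} (x : 'rV[R]_d) : 0 <= norm2 x.
Proof. exact: sqrtr_ge0. Qed.

Lemma sep {R : realType} {d} (S T : set 'rV[R]_d) (u v : 'rV[R]_d) (a b delta : R) :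
  S !=set0 -> T !=set0 -> dist u S <= a -> dist v T <= b ->
  delta <= set_gap S T -> delta - a - b <= norm2 (u - v).
Proof.
move=> [s0 Ss0] [t0 Tt0] hu hv hg.
apply/ler_addgt0Pr => e e0.
have e2 : 0 < e / 2 by rewrite divr_gt0.
have [_ [s Ss <-] hs] : exists2 r, [set norm2 (u - s) | s in S] r & r < a + e / 2.
  apply: inf_lt; first by exists (norm2 (u - s0)); exists s0.
  rewrite /dist in hu. lra.
have [_ [t Tt <-] ht] : exists2 r, [set norm2 (v - s) | s in T] r & r < b + e / 2.
  apply: inf_lt; first by exists (norm2 (v - t0)); exists t0.
  rewrite /dist in hv. lra.
have hst : set_gap S T <= norm2 (s - t).
  apply: ge_inf; last by exists s => //; exists t.
  by exists 0 => r [s' _ [t' _ <-]]; exact: norm2_ge0.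
have eq : s - t = - (u - s) + ((u - v) + (v - t)).
  by rewrite opprB !addrA !addrNK.
have h1 := norm2D (- (u - s)) ((u - v) + (v - t)).
have h2 := norm2D (u - v) (v - t).
rewrite norm2N -eq in h1.
lra.
Qed.
Theorem corollary4p5 (R : realType) (d M K : nat) (hM : (2 <= M)%N)
  (z : 'I_M -> 'rV[R]_d) (eps delta : R) (heps : 0 < eps) (hdelta : 2 * eps < delta)
  (Man : 'I_M -> 'I_K -> set 'rV[R]_d)
  (hne : forall m c, Man m c !=set0)
  (hsep : forall m (i j : 'I_K), i != j -> delta <= set_gap (Man m i) (Man m j))
  (B : 'I_M) (y k : 'I_K) (hyk : y != k)
  (hzB : nbhd_set (Man B k) eps (z B))
  (Phi : 'I_M -> 'I_M -> 'rV[R]_d -> 'rV[R]_d) (xi : R) (hxi : xi <= eps)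
  (hzn : forall n, n != B -> nbhd_set (Man n y) eps (z n))
  (hcons : forall n, n != B -> forall u, nbhd_set (Man n y) eps u ->
       dist (Phi n B u) (Man B y) <= xi)
  (lam kappa theta_r eps_g : R) (hlam : 0 <= lam) (hkappa : 0 < kappa)
  (heps_g : 0 < eps_g) (E_intra : 'I_M -> R) :
  let D := (delta - 2 * eps) ^+ 2 in
  gamma_int lam kappa theta_r E_intra Phi z B
    <= lam * (M - 1)%:R * expR (- (D / kappa)) /\
  gamma_int_tilde lam kappa theta_r eps_g E_intra Phi z B
    <= lam * (M - 1)%:R * expR (- (D / kappa)) + eps_g.
Proof.
move=> D.
have hg := hsep B y k hyk.
set c := expR (- (D / kappa)).
have hterm : forall n, n != B ->
  sigmoid (theta_r - E_intra n) * expR (- (E_inter (Phi n B) (z n) (z B) / kappa)) <= c.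
  move=> n hn.
  have hs := @sep _ _ _ _ _ _ xi eps delta (hne B y) (hne B k) (hcons n hn (z n) (hzn n hn)) hzB hg.
  set N := norm2 (Phi n B (z n) - z B) in hs.
  have N0 : 0 <= N := norm2_ge0 _.
  have hD : D <= E_inter (Phi n B) (z n) (z B).
    rewrite /E_inter -/N /D.
    have : 0 < delta - 2 * eps by lra.
    nra.
  have he : expR (- (E_inter (Phi n B) (z n) (z B) / kappa)) <= c.
    rewrite /c ler_expR lerN2 ler_pM2r ?invr_gt0 //.
  have hx : 0 < expR (- (E_inter (Phi n B) (z n) (z B) / kappa)) := expR_gt0 _.
  have hs0 : 0 <= sigmoid (theta_r - E_intra n).
    by rewrite /sigmoid div1r invr_ge0 addr_ge0 // expR_ge0.
  have hs1 : sigmoid (theta_r - E_intra n) <= 1.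
    rewrite /sigmoid div1r invf_le1; last by rewrite ltr_wpDr // expR_ge0.
    by rewrite lerDl expR_ge0.
  nra.
have hsum : gamma_int lam kappa theta_r E_intra Phi z B <= lam * (M - 1)%:R * c.
  rewrite /gamma_int -mulrA; apply: ler_wpM2l => //.
  apply: le_trans (ler_sum _ hterm) _.
  have -> : \sum_(n < M | n != B) c = \sum_(n in predC1 B) c by [].
  by rewrite sumr_const cardC1 card_ord subn1 mulr_natl.
split => //.
by rewrite /gamma_int_tilde lerD2r.
Qed.
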